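(* Let $\{F_x : x\in V(G)\}$ be a representation of a restricted frame graph $G$, and let $C$ be an induced cycle of $G$. Then there is a vertex $v\in V(C)$ such that $F_v$ contains the frame of every vertex in $V(C)\setminus N[v]$. Moreover, if $u\in V(C)$, $u\neq v$, is another vertex such that $F_u$ contains the frame of every vertex in $V(C)\setminus N[u]$, then $u$ is adjacent to $v$.
   Context: $N[v]=\{v\}\cup N(v)$. A frame is the boundary of an axis-parallel box $I\times J\subset\mathbb R^2$. A representation of a graph $G$ as a restricted frame graph is a family of frames $\{F_x : x\in V(G)\}$ with $xy\in E(G)$ iff $F_x\cap F_y\neq\emptyset$, satisfying: (1) corners of a frame do not coincide with any point of another frame; (2) the left side of any frame does not intersect any other frame; (3) if the right side of a frame intersects a second frame, this right side intersects both the top and the bottom side of the second frame; (4) if two frames have non-empty intersection, then no frame is entirely contained in the intersection of the two regions bounded by these two frames. A frame $F_1$ contains a frame $F_2$ if $F_1\cap F_2=\emptyset$ and $F_2$ lies in the region bounded by $F_1$. *)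

(* Defs.v *)
From HB Require Import structures.
From mathcomp Require Import all_boot all_order all_algebra.
From mathcomp Require Import reals.
Set Implicit Arguments. Unset Strict Implicit. Unset Printing Implicit Defensive.
Import Order.TTheory GRing.Theory Num.Theory.
Local Open Scope ring_scope.

Section Frames.
Variable R : realType.

(* A frame = boundary of the axis-parallel box [fl, fr] x [fb, ft],
   with nondegenerate intervals fl < fr and fb < ft. *)
Record frame := Frame { fl : R; fr : R; fb : R; ft : R }.

Definition nondeg (F : frame) : Prop := fl F < fr F /\ fb F < ft F.

Definition pt := (R * R)%type.

Definition region (F : frame) (p : pt) : Prop :=
  fl F <= p.1 <= fr F /\ fb F <= p.2 <= ft F.

Definition left_side (F : frame) (p : pt) : Prop :=
  p.1 = fl F /\ fb F <= p.2 <= ft F.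
Definition right_side (F : frame) (p : pt) : Prop :=
  p.1 = fr F /\ fb F <= p.2 <= ft F.
Definition bottom_side (F : frame) (p : pt) : Prop :=
  p.2 = fb F /\ fl F <= p.1 <= fr F.
Definition top_side (F : frame) (p : pt) : Prop :=
  p.2 = ft F /\ fl F <= p.1 <= fr F.

Definition on_frame (F : frame) (p : pt) : Prop :=
  left_side F p \/ right_side F p \/ bottom_side F p \/ top_side F p.

Definition corner (F : frame) (p : pt) : Prop :=
  (p.1 = fl F \/ p.1 = fr F) /\ (p.2 = fb F \/ p.2 = ft F).

Definition meets (A B : pt -> Prop) : Prop := exists p, A p /\ B p.

Definition frames_meet (F1 F2 : frame) : Prop := meets (on_frame F1) (on_frame F2).

Definition frame_contains (F1 F2 : frame) : Prop :=
  ~ frames_meet F1 F2 /\ (forall p, on_frame F2 p -> region F1 p).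

Definition restricted_frame_rep (V : finType) (adj : rel V) (F : V -> frame) : Prop :=
  (forall x, nondeg (F x)) /\
  (forall x y, x != y -> (adj x y <-> frames_meet (F x) (F y))) /\
  (* (1) corners of a frame do not lie on another frame *)
  (forall x y, x != y -> forall p, corner (F x) p -> ~ on_frame (F y) p) /\
  (* (2) the left side of a frame does not meet any other frame *)
  (forall x y, x != y -> ~ meets (left_side (F x)) (on_frame (F y))) /\
  (* (3) right side meeting another frame meets both its top and bottom side *)
  (forall x y, x != y -> meets (right_side (F x)) (on_frame (F y)) ->
      meets (right_side (F x)) (top_side (F y)) /\
      meets (right_side (F x)) (bottom_side (F y))) /\
  (forall x y, x != y -> frames_meet (F x) (F y) ->
     forall z, z != x -> z != y ->
       ~ (forall p, on_frame (F z) p -> region (F x) p /\ region (F y) p)).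

End Frames.

Definition simple_graph (V : finType) (adj : rel V) : Prop :=
  symmetric adj /\ irreflexive adj.

Definition induced_cycle (V : finType) (adj : rel V) (k : nat) (c : 'I_k -> V) : Prop :=
  (3 <= k)%N /\ injective c /\
  (forall i j : 'I_k,
     adj (c i) (c j) = ((val j == (val i).+1 %% k) || (val i == (val j).+1 %% k))%N).

Definition closed_nbhd (V : finType) (adj : rel V) (v u : V) : bool := (u == v) || adj v u.

(* Main.v *)
Require Import Defs.
From HB Require Import structures.
From mathcomp Require Import all_boot all_order all_algebra.
From mathcomp Require Import reals.
From mathcomp Require Import lra zify.
Set Implicit Arguments. Unset Strict Implicit. Unset Printing Implicit Defensive.
Import Order.TTheory GRing.Theory Num.Theory.
Section Geo.
Variable R : realType.
Local Open Scope ring_scope.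
Implicit Types F G : frame R.

Definition inside F G :=
  fl G < fl F /\ fr F < fr G /\ fb G < fb F /\ ft F < ft G.

Lemma on_frame_region F p : nondeg F -> on_frame F p -> region F p.
Proof.
case=> h1 h2; rewrite /on_frame /region /left_side /right_side /bottom_side /top_side.
case: p => x y /=.
case=> [[-> /andP[a b]]|[[-> /andP[a b]]|[[-> /andP[a b]]|[-> /andP[a b]]]]];
  split; apply/andP; split; lra.
Qed.

Lemma interval1 (a b c d : R) : a <= b -> c <= d -> c <= b -> a <= d ->
  (a < c /\ d < b) \/ (c < a /\ b < d) \/
  ((exists e, (e = c \/ e = d) /\ a <= e <= b) /\ (exists e, (e = a \/ e = b) /\ c <= e <= d)).
Proof.
move=> h1 h2 h3 h4.
case: (ltrP a c) => hac.
  case: (ltrP d b) => hdb; first by left.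
  right; right; split; [exists c | exists b]; split; try (by left); try (by right);
   apply/andP; split; lra.
case: (ltrP c a) => hca.
  case: (ltrP b d) => hbd; first by right; left.
  right; right; split; [exists d | exists a]; split; try (by left); try (by right);
   apply/andP; split; lra.
right; right; split; [exists c | exists a]; split; try (by left); try (by right);
   apply/andP; split; lra.
Qed.

Lemma nest F G p : nondeg F -> nondeg G -> ~ frames_meet F G ->
  region F p -> region G p -> inside G F \/ inside F G.
Proof.
case=> f1 f2 [g1 g2] nm [/andP[p1 p2] /andP[p3 p4]] [/andP[q1 q2] /andP[q3 q4]].
have hx := interval1 (ltW f1) (ltW g1) (le_trans q1 p2) (le_trans p1 q2).
have hy := interval1 (ltW f2) (ltW g2) (le_trans q3 p4) (le_trans p3 q4).
case: hx => [[x1 x2]|[[x1 x2]|[[ex [hex1 /andP[hex2 hex3]]] [ex' [hex1' /andP[hex2' hex3']]]]]];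
case: hy => [[y1 y2]|[[y1 y2]|[[ey [hey1 /andP[hey2 hey3]]] [ey' [hey1' /andP[hey2' hey3']]]]]].
- by left; rewrite /inside; lra.
- (* G's left side crosses F's top *)
  exfalso; apply: nm; exists (fl G, ft F); split.
    by right; right; right; split => //=; apply/andP; lra.
  by left; split => //=; apply/andP; lra.
- exfalso; apply: nm; exists (fl G, ey'); split.
    by right; right; case: hey1' => ->; [left|right]; split => //=; apply/andP; lra.
  by left; split => //=; apply/andP; lra.
- exfalso; apply: nm; exists (fl F, ft G); split.
    by left; split => //=; apply/andP; lra.
  by right; right; right; split => //=; apply/andP; lra.
- by right; rewrite /inside; lra.
- exfalso; apply: nm; exists (fl F, ey); split.
    by left; split => //=; apply/andP; lra.
  by right; right; case: hey1 => ->; [left|right]; split => //=; apply/andP; lra.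
- exfalso; apply: nm; exists (ex', fb G); split.
    by case: hex1' => ->; [left|right;left]; split => //=; apply/andP; lra.
  by right; right; left; split => //=; apply/andP; lra.
- exfalso; apply: nm; exists (ex, fb F); split.
    by right; right; left; split => //=; apply/andP; lra.
  by case: hex1 => ->; [left|right;left]; split => //=; apply/andP; lra.
- exfalso; apply: nm; exists (ex, ey'); split.
    by right; right; case: hey1' => ->; [left|right]; split => //=; apply/andP; lra.
  by case: hex1 => ->; [left|right;left]; split => //=; apply/andP; lra.
Qed.

Lemma horiz_contra F G (m : pt R) :
  (forall p, corner F p -> ~ on_frame G p) -> (forall p, corner G p -> ~ on_frame F p) ->
  (m.2 = fb F \/ m.2 = ft F) -> fl F <= m.1 <= fr F ->
  (m.2 = fb G \/ m.2 = ft G) -> fl G <= m.1 <= fr G -> False.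
Proof.
case: m => x y /= cFG cGF hF /andP[a b] hG /andP[c d].
case: (lerP (fl F) (fl G)) => h.
  apply: (cGF (fl G, y)); first by split => //=; left.
  by right; right; case: hF => ->; [left|right]; split => //=; apply/andP; lra.
apply: (cFG (fl F, y)); first by split => //=; left.
by right; right; case: hG => ->; [left|right]; split => //=; apply/andP; lra.
Qed.

Lemma meet_host (V : finType) (adj : rel V) (F : V -> frame R) x y :
  restricted_frame_rep adj F -> x != y -> frames_meet (F x) (F y) ->
  fr (F x) <= fr (F y) -> region (F x) (fl (F y), ft (F y)).
Proof.
move=> [nd [_ [r1 [r2 [r3 _]]]]] xy [m [mx my]] hfr.
have yx : y != x by rewrite eq_sym.
have [fx1 fx2] := nd x; have [fy1 fy2] := nd y.
case: mx => [mx|[mx|mx]].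
- by exfalso; apply: (r2 x y xy); exists m.
- have [[t [[t1 /andP[t2 t3]] [t4 /andP[t5 t6]]]] [b [[b1 /andP[b2 b3]] [b4 /andP[b5 b6]]]]] :=
    r3 x y xy (ex_intro _ m (conj mx my)).
  case: (lerP (fl (F x)) (fl (F y))) => hl.
    by split; apply/andP => /=; split; lra.
  exfalso; apply: (r2 x y xy); exists (fl (F x), ft (F y)); split.
    by split => //=; apply/andP; lra.
  by right; right; right; split => //=; apply/andP; lra.
- have hxh : (m.2 = fb (F x) \/ m.2 = ft (F x)) /\ fl (F x) <= m.1 <= fr (F x).
    by case: mx => [[-> h]|[-> h]]; split => //; [left|right].
  case: hxh => hx1 hx2.
  case: my => [my|[my|my]].
  + by exfalso; apply: (r2 y x yx); exists m; split => //; right; right.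
  + have [[t [[t1 /andP[t2 t3]] [t4 /andP[t5 t6]]]] _] :=
      r3 y x yx (ex_intro _ m (conj my (or_intror (or_intror mx)))).
    exfalso; apply: (r1 x y xy (fr (F x), ft (F x))); first by split => /=; [right|right].
    by right; left; split => /=; [lra|apply/andP; lra].
  + exfalso; apply: (horiz_contra (r1 x y xy) (r1 y x yx) hx1 hx2).
      by case: my => [[-> _]|[-> _]]; [left|right].
    by case: my => [[_ h]|[_ h]].
Qed.

Lemma propagate F G H : nondeg F -> nondeg G -> nondeg H -> ~ frames_meet F G ->
  frames_meet G H -> inside H F -> inside G F.
Proof.
move=> nF nG nH nm [m [mG mH]] ins.
have rH := on_frame_region nH mH; have rG := on_frame_region nG mG.
have rF : region F m.
  move: rH ins; case: m {mG mH rG} => x y [/andP[a b] /andP[c d]] /=.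
  rewrite /inside => ?; split; apply/andP; split; lra.
case: (nest nF nG nm rF rG) => // ins2.
exfalso; move: mG rH ins ins2; case: m {rF rG mH} => x y /=.
rewrite /inside /on_frame /left_side /right_side /bottom_side /top_side /=.
move=> + [/andP[a b] /andP[c d]].
by case=> [[e _]|[[e _]|[[e _]|[e _]]]]; rewrite /inside => ??; simpl in *; lra.
Qed.

Lemma inside_contains F G : nondeg G -> ~ frames_meet F G -> inside G F -> frame_contains F G.
Proof.
move=> nG nm ins; split => // m /(on_frame_region nG).
move: ins; case: m => x y; rewrite /inside => ? [/andP[a b] /andP[c d]] /=.
split; apply/andP; split; lra.
Qed.

Lemma double_contains F G : nondeg F -> nondeg G ->
  frame_contains F G -> frame_contains G F -> False.
Proof.
move=> [f1 f2] [g1 g2] [nm h1] [_ h2].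
have [/andP[a _] /andP[b _]] : region F (fl G, fb G).
  by apply: h1; left; split => //=; apply/andP; lra.
have [/andP[c _] /andP[d _]] : region G (fl F, fb F).
  by apply: h2; left; split => //=; apply/andP; lra.
apply: nm; exists (fl F, fb F); simpl in *; split; left; split => /=. all: try lra. all: apply/andP; split; lra.
Qed.

Lemma path_inside (w : nat -> frame R) X n :
  (forall d, (d <= n)%N -> nondeg (w d)) -> nondeg X ->
  (forall d, (d <= n)%N -> ~ frames_meet X (w d)) ->
  (forall d, (d < n)%N -> frames_meet (w d.+1) (w d)) ->
  inside (w 0%N) X -> forall d, (d <= n)%N -> inside (w d) X.
Proof.
move=> nd nX nm me h0; elim=> [//|d IH] hd.
apply: (propagate nX (nd _ hd) (nd _ (ltnW hd)) (nm _ hd) (me _ hd)).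
exact: IH (ltnW hd).
Qed.

End Geo.

Lemma modS k t : t < k -> t.+1 %% k = if t.+1 == k then 0 else t.+1.
Proof.
move=> h; case: eqP => [->|ne]; first by rewrite modnn.
by rewrite modn_small //; lia.
Qed.

Lemma modSm m k : (m %% k).+1 %% k = m.+1 %% k.
Proof. by rewrite -addn1 modnDml addn1. Qed.

Theorem lemma3p7 (R : realType) (V : finType) (adj : rel V) (F : V -> frame R)
  (k : nat) (c : 'I_k -> V) :
  simple_graph adj ->
  restricted_frame_rep adj F ->
  induced_cycle adj c ->
  exists i : 'I_k,
    (forall j : 'I_k, ~~ closed_nbhd adj (c i) (c j) ->
        frame_contains (F (c i)) (F (c j))) /\
    (forall i' : 'I_k, c i' <> c i ->
       (forall j : 'I_k, ~~ closed_nbhd adj (c i') (c j) ->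
          frame_contains (F (c i')) (F (c j))) ->
       adj (c i') (c i)).
Proof.
move=> [sym irr] rep [k3 [cinj cadj]].
have rep' := rep; case: rep' => nd [meetiff _].
have kpos : 0 < k by lia.
pose cyc (m : nat) : 'I_k := Ordinal (ltn_pmod m kpos).
have [z _ zmax] := @arg_maxP _ _ 'I_k (cyc 0) xpredT (fun i => fr (F (c i))) isT.
set z0 := val z.
pose cc t := c (cyc (z0 + t)).
have cc0 : cc 0 = c z.
  rewrite /cc; f_equal; apply: val_inj => /=; rewrite addn0; apply: modn_small; exact: ltn_ord.
have ccadj t1 t2 : t1 < k -> t2 < k -> adj (cc t1) (cc t2) =
    (t2 == t1.+1 %% k) || (t1 == t2.+1 %% k).
  move=> h1 h2; rewrite /cc cadj /=.
  rewrite !modSm -!addnS !eqn_modDl.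
  by rewrite (modn_small h1) (modn_small h2).
have adjchar t1 t2 : t1 < k -> t2 < k -> adj (cc t1) (cc t2) <->
    (t2 = t1.+1 \/ t1 = t2.+1 \/ (t1.+1 = k /\ t2 = 0) \/ (t2.+1 = k /\ t1 = 0)).
  move=> h1 h2; rewrite ccadj //.
  case: (ltnP t1.+1 k) => c1; [rewrite (modn_small c1)|
    rewrite (_ : t1.+1 %% k = 0); last by rewrite (_ : t1.+1 = k) ?modnn; lia];
  (case: (ltnP t2.+1 k) => c2; [rewrite (modn_small c2)|
    rewrite (_ : t2.+1 %% k = 0); last by rewrite (_ : t2.+1 = k) ?modnn; lia]); lia.
have ccinj t1 t2 : t1 < k -> t2 < k -> cc t1 = cc t2 -> t1 = t2.
  move=> h1 h2 /cinj /(congr1 val) /= /eqP.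
  by rewrite eqn_modDl (modn_small h1) (modn_small h2) => /eqP.
have ccall (j : 'I_k) : exists2 t, t < k & c j = cc t.
  exists ((j + (k - z0)) %% k); first exact: ltn_pmod.
  rewrite /cc; f_equal; apply: val_inj => /=.
  have zk : z0 < k by apply: ltn_ord.
  rewrite modnDmr (_ : z0 + (j + (k - z0)) = j + k); last by lia.
  by rewrite modnDr modn_small.
have meet_t t1 t2 : t1 < k -> t2 < k -> t1 <> t2 ->
    (t2 = t1.+1 \/ t1 = t2.+1 \/ (t1.+1 = k /\ t2 = 0) \/ (t2.+1 = k /\ t1 = 0)) ->
    frames_meet (F (cc t1)) (F (cc t2)).
  move=> h1 h2 ne hc; apply/(meetiff); last by apply/adjchar.
  by apply/eqP => /(ccinj _ _ h1 h2).
have nmeet_t t1 t2 : t1 < k -> t2 < k -> t1 <> t2 ->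
    ~ (t2 = t1.+1 \/ t1 = t2.+1 \/ (t1.+1 = k /\ t2 = 0) \/ (t2.+1 = k /\ t1 = 0)) ->
    ~ frames_meet (F (cc t1)) (F (cc t2)).
  move=> h1 h2 ne hc /(meetiff _ _ _) hm; apply: hc; apply/adjchar => //; apply: hm.
  by apply/eqP => /(ccinj _ _ h1 h2).
suff [t tk part1] : exists2 t, t < k & forall j : 'I_k, ~~ closed_nbhd adj (cc t) (c j) ->
        frame_contains (F (cc t)) (F (c j)).
  exists (cyc (z0 + t)); split; first by move=> j hj; apply: (part1 j hj).
  move=> i' ne p1'; apply/negPn/negP => nadj.
  apply: (double_contains (nd (c i')) (nd (cc t))).
    apply: (p1' (cyc (z0 + t))); rewrite /closed_nbhd negb_or nadj andbT.
    by apply/eqP => e; apply: ne; rewrite e.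
  apply: part1; rewrite /closed_nbhd negb_or.
  rewrite /cc (sym (c _)) nadj andbT; apply/eqP => e; exact: ne.
suff [t tk part1] : exists2 t, t < k & forall t', t' < k -> t' <> t ->
      ~ adj (cc t) (cc t') -> frame_contains (F (cc t)) (F (cc t')).
  exists t => // j; have [t' t'k ->] := ccall j.
  rewrite /closed_nbhd negb_or => /andP[/eqP ne /negP na].
  apply: part1 => // e; apply: ne; by rewrite e.
case: (ltnP k 4) => k4.
  exists 1; first lia.
  move=> t' t'k ne na; exfalso; apply: na; apply/adjchar; lia.
have hP : region (F (cc 1)) (fl (F (cc 0)), ft (F (cc 0))).
  apply: (meet_host rep); first by apply/eqP => /(ccinj 1 0); lia.
    apply: meet_t; lia.
  by rewrite cc0; apply: zmax.
have hQ : region (F (cc (k.-1))) (fl (F (cc 0)), ft (F (cc 0))).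
  apply: (meet_host rep); first by apply/eqP => /(ccinj k.-1 0); lia.
    apply: meet_t; lia.
  by rewrite cc0; apply: zmax.
have nPQ : ~ frames_meet (F (cc 1)) (F (cc k.-1)) by apply: nmeet_t; lia.
case: (nest (nd _) (nd _) nPQ hP hQ) => ins.
- exists 1; first lia.
  move=> t' t'k ne na.
  have nat' : ~ (t' = 2 \/ 1 = t'.+1 \/ (2 = k /\ t' = 0) \/ (t'.+1 = k /\ 1 = 0)).
    by move=> h; apply: na; apply/adjchar => //; lia.
  have hp := @path_inside R (fun d => F (cc (k.-1 - d))) (F (cc 1)) (k - 4).
  have := hp (fun d _ => nd _) (nd _) _ _ _ (k.-1 - t').
  rewrite (_ : k.-1 - (k.-1 - t') = t'); last by lia.
  move=> H; apply: inside_contains; [exact: nd| |apply: H].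
  + apply: nmeet_t; lia.
  + move=> d hd; apply: nmeet_t; lia.
  + move=> d hd; apply: meet_t; lia.
  + by rewrite subn0.
  + lia.
- exists k.-1; first lia.
  move=> t' t'k ne na.
  have nat' : ~ (t' = k \/ k.-1 = t'.+1 \/ (k = k /\ t' = 0) \/ (t'.+1 = k /\ k.-1 = 0)).
    by move=> h; apply: na; apply/adjchar => //; lia.
  have hp := @path_inside R (fun d => F (cc (1 + d))) (F (cc k.-1)) (k - 4).
  have := hp (fun d _ => nd _) (nd _) _ _ _ (t' - 1).
  rewrite (_ : 1 + (t' - 1) = t'); last by lia.
  move=> H; apply: inside_contains; [exact: nd| |apply: H].
  + apply: nmeet_t; lia.
  + move=> d hd; apply: nmeet_t; lia.
  + move=> d hd; apply: meet_t; lia.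
  + by rewrite addn0.
  + lia.
Qed.
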